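(* For every $n\ge2$, the group $\mathcal{AM}(\mathrm{Cr}_n)$ is isomorphic to a semidirect product $(S_n\times S_n)\rtimes\mathbb{Z}_2$.
   Context: $S_n$ is the symmetric group. For $n\ge2$, $\mathrm{Cr}_n$ is the poset $\{x_1,\dots,x_n,y_1,\dots,y_n\}$ whose only relations between distinct elements are $x_i<y_i$ ($1\le i\le n$), $x_{i+1}<y_i$ ($1\le i\le n-1$) and $x_1<y_n$. For a finite connected poset $X$ and $x<y$, $e_{xy}$ denotes the incidence-algebra basis element, and $B=\{e_{xy}:x<y\}$. $\mathcal{C}(X)$ is the set of maximal chains. For a bijection $\theta:B\to B$ and $C:u_1<\dots<u_m$ in $\mathcal{C}(X)$, $\theta$ is increasing on $C$ if there is $D:v_1<\dots<v_m$ in $\mathcal{C}(X)$ with $\theta(e_{u_iu_j})=e_{v_iv_j}$ for all $i<j$, decreasing if $\theta(e_{u_iu_j})=e_{v_{m-j+1}v_{m-i+1}}$ for all $i<j$. $\mathcal{M}(X)$: bijections $B\to B$ increasing or decreasing on every maximal chain. A walk is a sequence $u_0,\dots,u_m$ where for each $i$ one of $u_i,u_{i+1}$ covers the other; closed if $u_0=u_m$. For a closed walk $\Gamma:u_0,\dots,u_m=u_0$ and $z\in X$: $s^+_{\theta,\Gamma}(z)=|\{i: u_i<u_{i+1},\ \exists w>z,\ \theta(e_{zw})=e_{u_iu_{i+1}}\}|$, $s^-_{\theta,\Gamma}(z)=|\{i: u_i>u_{i+1},\ \exists w>z,\ \theta(e_{zw})=e_{u_{i+1}u_i}\}|$, $t^+_{\theta,\Gamma}(z)=|\{i: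 u_i<u_{i+1},\ \exists w<z,\ \theta(e_{wz})=e_{u_iu_{i+1}}\}|$, $t^-_{\theta,\Gamma}(z)=|\{i: u_i>u_{i+1},\ \exists w<z,\ \theta(e_{wz})=e_{u_{i+1}u_i}\}|$, $0\le i\le m-1$. $\theta$ is admissible if $s^+-s^-=t^+-t^-$ at every $z$ for every closed walk; $\mathcal{AM}(X)$ is the set of admissible elements of $\mathcal{M}(X)$, a group under composition. *)

(* Defs.v *)
From HB Require Import structures.
From mathcomp Require Import all_boot all_order all_algebra all_fingroup.
Set Implicit Arguments. Unset Strict Implicit. Unset Printing Implicit Defensive.
Import GRing.Theory Num.Theory.

Section PosetDefs.
Variables (T : finType) (lt : rel T).

(* Basis of the incidence algebra: e_xy for x < y, represented by (x,y). *)
Definition incid_basis := {p : T * T | lt p.1 p.2}.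

Definition is_chain (c : seq T) : Prop := sorted lt c.
Definition is_max_chain (c : seq T) : Prop :=
  c <> [::] /\ is_chain c /\
  forall d : seq T, is_chain d -> {subset c <= d} -> {subset d <= c}.

(* theta is increasing on C = u_0 < ... < u_{m-1} (0-indexed) *)
Definition increasing_on (theta : {perm incid_basis}) (c : seq T) : Prop :=
  exists2 d : seq T, is_max_chain d /\ size d = size c &
    forall (i j : nat), i < j -> j < size c ->
      forall b : incid_basis, val b = (nth (val b).1 c i, nth (val b).1 c j) ->
        val (theta b) = (nth (val b).1 d i, nth (val b).1 d j).

(* theta is decreasing on C: theta(e_{u_i u_j}) = e_{v_{m-j+1} v_{m-i+1}} (1-indexed) *)
Definition decreasing_on (theta : {perm incid_basis}) (c : seq T) : Prop :=
  exists2 d : seq T, is_max_chain d /\ size d = size c &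
    forall (i j : nat), i < j -> j < size c ->
      forall b : incid_basis, val b = (nth (val b).1 c i, nth (val b).1 c j) ->
        val (theta b) = (nth (val b).1 d (size c - 1 - j), nth (val b).1 d (size c - 1 - i)).

Definition in_M (theta : {perm incid_basis}) : Prop :=
  forall c, is_max_chain c -> increasing_on theta c \/ decreasing_on theta c.

Definition covers (y x : T) : bool := lt x y && [forall z, ~~ (lt x z && lt z y)].
Definition adj (a b : T) : bool := covers a b || covers b a.

(* A closed walk u_0, ..., u_m = u_0 is encoded by u_0 and p = [:: u_1; ...; u_m]. *)
Definition closed_walk (u0 : T) (p : seq T) : bool := path adj u0 p && (last u0 p == u0).

Definition steps (u0 : T) (p : seq T) : seq (T * T) := zip (u0 :: p) p.

Definition s_plus (theta : {perm incid_basis}) (u0 : T) (p : seq T) (z : T) : nat :=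
  count (fun st : T * T => lt st.1 st.2 &&
           [exists b : incid_basis, ((val b).1 == z) && (val (theta b) == st)]) (steps u0 p).
Definition s_minus (theta : {perm incid_basis}) (u0 : T) (p : seq T) (z : T) : nat :=
  count (fun st : T * T => lt st.2 st.1 &&
           [exists b : incid_basis, ((val b).1 == z) && (val (theta b) == (st.2, st.1))]) (steps u0 p).
Definition t_plus (theta : {perm incid_basis}) (u0 : T) (p : seq T) (z : T) : nat :=
  count (fun st : T * T => lt st.1 st.2 &&
           [exists b : incid_basis, ((val b).2 == z) && (val (theta b) == st)]) (steps u0 p).
Definition t_minus (theta : {perm incid_basis}) (u0 : T) (p : seq T) (z : T) : nat :=
  count (fun st : T * T => lt st.2 st.1 &&
           [exists b : incid_basis, ((val b).2 == z) && (val (theta b) == (st.2, st.1))]) (steps u0 p).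

Definition admissible (theta : {perm incid_basis}) : Prop :=
  forall (u0 : T) (p : seq T), closed_walk u0 p -> forall z : T,
    ((s_plus theta u0 p z)%:Z - (s_minus theta u0 p z)%:Z =
     (t_plus theta u0 p z)%:Z - (t_minus theta u0 p z)%:Z)%R.

Definition in_AM (theta : {perm incid_basis}) : Prop := in_M theta /\ admissible theta.

End PosetDefs.

(* The crown Cr_n: (false, i) = x_{i+1}, (true, j) = y_{j+1} (0-indexed).
   Relations: x_i < y_i and x_{i+1} < y_i (indices mod n), i.e. x_1 < y_n. *)
Notation crown_elt n := (bool * 'I_n)%type.
Definition crown_lt (n : nat) : rel (crown_elt n) :=
  fun a b => match a, b with
             | (false, i), (true, j) => (val i == val j) || (val i == (val j).+1 %% n)
             | _, _ => false
             end.

(* Main.v *)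
Require Import Defs.
From HB Require Import structures.
From mathcomp Require Import all_boot all_order all_algebra all_fingroup all_solvable.
From mathcomp Require Import zify.
Set Implicit Arguments. Unset Strict Implicit. Unset Printing Implicit Defensive.

Section Crown.
Variable m : nat.
Local Notation n := m.+2.
Local Notation V := (crown_elt n).
Local Notation E := (incid_basis (@crown_lt n)).

Lemma crown_ltE (k j : 'I_n) : crown_lt (false, k) (true, j) = (k == j) || (k == ordS j).
Proof. by []. Qed.

Lemma crown_lt_shape (a b : V) : crown_lt a b -> exists k j, a = (false, k) /\ b = (true, j) /\ ((k == j) || (k == ordS j)).
Proof. by case: a b => [[] k] [[] j] //= H; exists k, j. Qed.

Lemma ordS_neq (i : 'I_n) : (ordS i == i) = false.
Proof.
apply/negbTE; apply/eqP => /(congr1 val) /=.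
case: i => i /= Hi.
case: (ltngtP i.+1 n) => [H|H|H].
- rewrite modn_small //; lia.
- lia.
- rewrite H modnn; lia.
Qed.

Lemma dec_subproof (x : bool * 'I_n) :
  crown_lt (false, if x.1 then x.2 else ordS x.2) (true, x.2).
Proof. by rewrite crown_ltE; case: x.1; rewrite eqxx ?orbT. Qed.

Definition dec (x : bool * 'I_n) : E :=
  exist _ ((false, if x.1 then x.2 else ordS x.2), (true, x.2)) (dec_subproof x).

Definition enc (e : E) : bool * 'I_n := ((val e).1.2 == (val e).2.2, (val e).2.2).

Lemma encK : cancel dec enc.
Proof. by case=> [[] j]; rewrite /enc /= ?eqxx ?ordS_neq. Qed.

Lemma decK : cancel enc dec.
Proof.
case=> [[a b] /= H]; apply: val_inj => /=.
have [k [j [Ha [Hb Hk]]]] := crown_lt_shape H.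
rewrite /enc /= Ha Hb /=. case: (k =P j) Hk => [-> //|_] /= /eqP -> //.
Qed.


Lemma crown_lt_fst (a b : V) : crown_lt a b -> a.1 = false /\ b.1 = true.
Proof. by move/crown_lt_shape => [k [j [-> [-> _]]]]. Qed.

Lemma crown_lt_irr (a : V) : crown_lt a a = false.
Proof. by case: a => [[] k]. Qed.

Lemma chain_shape (c : seq V) : sorted (@crown_lt n) c ->
  c = [::] \/ (exists a, c = [:: a]) \/ (exists a b, c = [:: a; b] /\ crown_lt a b).
Proof.
case: c => [|a [|b [|d s]]] /=.
- by left.
- by right; left; exists a.
- by move=> H; right; right; exists a, b; rewrite ?andbT in H *.
- move/and3P => [/crown_lt_fst [_ H1] /crown_lt_fst [H2 _] _].
  by rewrite H1 in H2.
Qed.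

Lemma all_in_M (theta : {perm E}) : in_M theta.
Proof.
move=> c [cne [cch cmax]]; left.
case: (chain_shape cch) => [//|[[a ca]|[x [y [ca Hxy]]]]].
- exfalso.
  have [b Hab] : exists b, crown_lt a b \/ crown_lt b a.
    case: a {ca} => [[] k].
    + by exists (false, k); right; rewrite crown_ltE eqxx.
    + by exists (true, k); left; rewrite crown_ltE eqxx.
  case: Hab => Hab.
  + have := cmax [:: a; b]; rewrite /is_chain /= Hab ca => /(_ isT).
    have Hs : {subset [:: a] <= [:: a; b]} by move=> z; rewrite !inE => ->.
    move=> /(_ Hs b); rewrite !inE eqxx orbT => /(_ isT) /eqP Eb.
    by rewrite Eb crown_lt_irr in Hab.
  + have := cmax [:: b; a]; rewrite /is_chain /= Hab ca => /(_ isT).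
    have Hs : {subset [:: a] <= [:: b; a]} by move=> z; rewrite !inE => ->; rewrite orbT.
    move=> /(_ Hs b); rewrite !inE eqxx => /(_ isT) /eqP Eb.
    by rewrite Eb crown_lt_irr in Hab.
- subst c.
  pose e0 : E := exist _ (x, y) Hxy.
  exists [:: (val (theta e0)).1; (val (theta e0)).2].
    split=> //; split=> //; split.
      by rewrite /is_chain /= andbT; exact: (valP (theta e0)).
    move=> d' Hd' Hsub.
    have H0 := Hsub (val (theta e0)).1; have H1 := Hsub (val (theta e0)).2.
    rewrite !inE !eqxx ?orbT in H0 H1.
    have [F0 F1] := crown_lt_fst (valP (theta e0)).
    case: (chain_shape Hd') => [->//|[[a Ea]|[a [b [Ea Hab]]]]]; subst d'.
    + move: (H0 isT) (H1 isT); rewrite !inE => /eqP E0 /eqP E1.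
      by move: F0 F1; rewrite E0 E1 => ->.
    + have [Fa Fb] := crown_lt_fst Hab.
      move: (H0 isT) (H1 isT); rewrite !inE => /orP [] /eqP E0 /orP [] /eqP E1;
        try (by move: F0 F1 Fa Fb; rewrite ?E0 ?E1 => -> // ->);
        by move=> z; rewrite !inE -E0 -E1 orbC.
  move=> i j Hij Hj b /=.
  have -> : i = 0 by move: Hij Hj => /=; lia.
  have -> : j = 1 by move: Hij Hj => /=; lia.
  move=> /= Hb.
  have -> : b = e0 by apply: val_inj.
  by case: (val (theta e0)).
Qed.


Local Open Scope ring_scope.
Import GRing.Theory Num.Theory.

Definition up (u0 : V) (p : seq V) (e : E) : nat :=
  count (fun st : V * V => val e == st) (steps u0 p).
Definition dn (u0 : V) (p : seq V) (e : E) : nat :=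
  count (fun st : V * V => val e == (st.2, st.1)) (steps u0 p).
Definition W (u0 : V) (p : seq V) (e : E) : int := (up u0 p e)%:Z - (dn u0 p e)%:Z.

Lemma count_exists (theta : {perm E}) (Q : pred E) (g : V * V -> V * V) (st : seq (V * V)) :
  count (fun s => crown_lt (g s).1 (g s).2 && [exists b, Q b && (val (theta b) == g s)]) st
  = (\sum_(b | Q b) count (fun s => val (theta b) == g s) st)%N.
Proof.
elim: st => [|s st IH] /=; first by rewrite big1.
rewrite big_split /= -IH; congr (_ + _)%N.
case: existsP => [[b /andP [Qb /eqP Eb]]|Hn].
- rewrite -Eb (valP (theta b)) (bigD1 b) //= eqxx big1 // => b' /andP [_ nb'].
  apply/eqP; rewrite eqb0; apply: contra nb' => /eqP /val_inj /perm_inj ->.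
  by [].
- rewrite andbF big1 // => b Qb; case: eqP => // H; case: Hn; exists b.
  by rewrite Qb H eqxx.
Qed.

Lemma PoszSum (I : finType) (P : pred I) (F : I -> nat) :
  ((\sum_(i | P i) F i)%N)%:Z = \sum_(i | P i) (F i)%:Z.
Proof. exact: (big_morph Posz PoszD (erefl _)). Qed.

Lemma s_sub (theta : {perm E}) u0 p z :
  (s_plus theta u0 p z)%:Z - (s_minus theta u0 p z)%:Z =
  \sum_(b | (val b).1 == z) W u0 p (theta b).
Proof.
have -> : s_plus theta u0 p z = (\sum_(b | (val b).1 == z) up u0 p (theta b))%N.
  exact: (count_exists theta (fun b => (val b).1 == z) id).
have -> : s_minus theta u0 p z = (\sum_(b | (val b).1 == z) dn u0 p (theta b))%N.
  exact: (count_exists theta (fun b => (val b).1 == z) (fun s => (s.2, s.1))).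
by rewrite !PoszSum -sumrB.
Qed.

Lemma t_sub (theta : {perm E}) u0 p z :
  (t_plus theta u0 p z)%:Z - (t_minus theta u0 p z)%:Z =
  \sum_(b | (val b).2 == z) W u0 p (theta b).
Proof.
have -> : t_plus theta u0 p z = (\sum_(b | (val b).2 == z) up u0 p (theta b))%N.
  exact: (count_exists theta (fun b => (val b).2 == z) id).
have -> : t_minus theta u0 p z = (\sum_(b | (val b).2 == z) dn u0 p (theta b))%N.
  exact: (count_exists theta (fun b => (val b).2 == z) (fun s => (s.2, s.1))).
by rewrite !PoszSum -sumrB.
Qed.


Definition A (i : 'I_n) : E := dec (true, i).
Definition B (i : 'I_n) : E := dec (false, i).
Definition typ (e : E) : bool := (enc e).1.

Lemma typA i : typ (A i) = true. Proof. by rewrite /typ /A encK. Qed.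
Lemma typB i : typ (B i) = false. Proof. by rewrite /typ /B encK. Qed.

Lemma AB_neq i j : (A i == B j) = false.
Proof. by rewrite (inj_eq (can_inj (@encK))). Qed.

Lemma fst_true (b : E) i : ((val b).1 == (true, i)) = false.
Proof. by rewrite -[b]decK; case: (enc b) => t j. Qed.

Lemma snd_false (b : E) i : ((val b).2 == (false, i)) = false.
Proof. by rewrite -[b]decK; case: (enc b) => t j. Qed.

Lemma edges_at_true i (b : E) : ((val b).2 == (true, i)) = (b == A i) || (b == B i).
Proof.
rewrite -[b]decK /A /B !(inj_eq (can_inj (@encK))); case: (enc b) => [t j] /=.
by rewrite !xpair_eqE /=; case: t; rewrite ?orbF.
Qed.

Lemma edges_at_false k (b : E) :
  ((val b).1 == (false, k)) = (b == A k) || (b == B (ord_pred k)).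
Proof.
rewrite -[b]decK /A /B !(inj_eq (can_inj (@encK))); case: (enc b) => [t j] /=.
rewrite !xpair_eqE /=; case: t => /=; rewrite ?orbF //.
by rewrite -(can2_eq (@ordSK n) (@ord_predK n)).
Qed.

Lemma big_two (F : E -> int) (P : pred E) e1 e2 : e1 != e2 ->
  P =1 (fun b => (b == e1) || (b == e2)) -> \sum_(b | P b) F b = F e1 + F e2.
Proof.
move=> ne HP; rewrite (eq_bigl _ _ HP) (bigD1 e1) ?eqxx //= (bigD1 e2) /=;
  last by rewrite eqxx orbT eq_sym ne.
rewrite big_pred0 ?addr0 // => b.
by case: (b =P e1); case: (b =P e2).
Qed.

Lemma adjE (a b : V) : adj (@crown_lt n) a b = crown_lt a b || crown_lt b a.
Proof.
have Hf : forall x y : V, [forall z, ~~ (crown_lt x z && crown_lt z y)].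
  by move=> [[] i] [[] j]; apply/forallP => [[[] k]]; rewrite /= ?andbF.
by rewrite /adj /covers !Hf !andbT orbC.
Qed.

Lemma steps_adj u0 p : path (adj (@crown_lt n)) u0 p ->
  forall st, st \in steps u0 p -> adj (@crown_lt n) st.1 st.2.
Proof.
elim: p u0 => [|x p IH] u0 //= /andP [H1 H2] st.
rewrite inE => /orP [/eqP -> //|]; exact: IH.
Qed.

Lemma count_snd u0 p v : count (fun st : V * V => st.2 == v) (steps u0 p) = count (pred1 v) p.
Proof. by elim: p u0 => [|x p IH] u0 //=; rewrite IH. Qed.

Lemma count_fst u0 p v : count (fun st : V * V => st.1 == v) (steps u0 p) = count (pred1 v) (belast u0 p).
Proof. by elim: p u0 => [|x p IH] u0 //=; rewrite IH. Qed.

Lemma count_closed u0 p v : last u0 p = u0 ->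
  count (fun st : V * V => st.1 == v) (steps u0 p) = count (fun st : V * V => st.2 == v) (steps u0 p).
Proof.
move=> Hl; rewrite count_fst count_snd.
have := congr1 (count (pred1 v)) (lastI u0 p).
rewrite -cats1 count_cat Hl /= addn0 addnC => /eqP.
by rewrite eqn_add2r => /eqP <-.
Qed.

Lemma count_split (X : eqType) (a b c : pred X) s :
  (forall x, x \in s -> a x = (b x + c x)%N :> nat) -> count a s = (count b s + count c s)%N.
Proof.
elim: s => [|x s IH] //= H.
rewrite H ?inE ?eqxx // IH; first by rewrite addnACA.
by move=> y Hy; apply: H; rewrite inE Hy orbT.
Qed.


Lemma P1 (a b : V) i : adj (@crown_lt n) a b ->
  (b == (true, i)) = ((val (A i) == (a, b)) + (val (B i) == (a, b)))%N :> nat.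
Proof.
case: b => [[] j]; case: a => [[] k]; rewrite adjE ?crown_ltE //=;
  try by rewrite !xpair_eqE /= ?andbF.
rewrite orbF => H; rewrite !xpair_eqE /=.
case: (j =P i) => [Eji|Hji]; last first.
  by rewrite (eq_sym i j); case: (j =P i) Hji => // _ _; rewrite !andbF.
subst j; rewrite !eqxx !andbT.
have := ordS_neq i.
case/orP: H => /eqP ->; rewrite ?eqxx //.
  by move=> ->.
by rewrite eq_sym => ->.
Qed.

Lemma P2 (a b : V) k : adj (@crown_lt n) a b ->
  (a == (false, k)) = ((val (A k) == (a, b)) + (val (B (ord_pred k)) == (a, b)))%N :> nat.
Proof.
case: b => [[] j]; case: a => [[] k']; rewrite adjE ?crown_ltE //=;
  try by rewrite !xpair_eqE /= ?andbF.
rewrite orbF => H.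
rewrite !xpair_eqE /= ord_predK.
case: (k' =P k) => [Ek|Hk]; last first.
  by rewrite (eq_sym k k'); case: (k' =P k) Hk => // _ _; rewrite !andbF.
subst k'; rewrite eqxx /=.
rewrite -(can2_eq (@ord_predK n) (@ordSK n)) in H.
have Hp : (ord_pred k == k) = false.
  apply/negbTE/negP => /eqP E'.
  by have := ordS_neq k; rewrite -{1}E' ord_predK eqxx.
by case/orP: H => /eqP Ej; rewrite -Ej eqxx ?Hp // eq_sym Hp.
Qed.


Lemma adj_sym (a b : V) : adj (@crown_lt n) a b = adj (@crown_lt n) b a.
Proof. by rewrite !adjE orbC. Qed.

Lemma VT u0 p i : path (adj (@crown_lt n)) u0 p -> last u0 p = u0 ->
  W u0 p (A i) + W u0 p (B i) = 0.
Proof.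
move=> Hp Hl.
have Hup : count (fun st : V * V => st.2 == (true, i)) (steps u0 p) = (up u0 p (A i) + up u0 p (B i))%N.
  by rewrite /up; apply: count_split => [[a b]] /(steps_adj Hp) /= Hadj; exact: P1.
have Hdn : count (fun st : V * V => st.1 == (true, i)) (steps u0 p) = (dn u0 p (A i) + dn u0 p (B i))%N.
  rewrite /dn; apply: count_split => [[a b]] /(steps_adj Hp) /= Hadj; apply: P1.
  by rewrite adj_sym.
have := count_closed (true, i) Hl; rewrite Hup Hdn => /(congr1 Posz); rewrite !PoszD => H.
by rewrite /W addrACA -opprD H subrr.
Qed.

Lemma VF u0 p k : path (adj (@crown_lt n)) u0 p -> last u0 p = u0 ->
  W u0 p (A k) + W u0 p (B (ord_pred k)) = 0.
Proof.
move=> Hp Hl.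
have Hup : count (fun st : V * V => st.1 == (false, k)) (steps u0 p) = (up u0 p (A k) + up u0 p (B (ord_pred k)))%N.
  by rewrite /up; apply: count_split => [[a b]] /(steps_adj Hp) /= Hadj; exact: P2.
have Hdn : count (fun st : V * V => st.2 == (false, k)) (steps u0 p) = (dn u0 p (A k) + dn u0 p (B (ord_pred k)))%N.
  rewrite /dn; apply: count_split => [[a b]] /(steps_adj Hp) /= Hadj; apply: P2.
  by rewrite adj_sym.
have := count_closed (false, k) Hl; rewrite Hup Hdn => /(congr1 Posz); rewrite !PoszD => H.
by rewrite /W addrACA -opprD H subrr.
Qed.

Lemma ordS_ind (X : Type) (f : 'I_n -> X) : (forall i, f (ordS i) = f i) -> forall i, f i = f ord0.
Proof.
move=> H [i Hi]; elim: i Hi => [|i IH] Hi; first by congr f; apply: val_inj.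
have Hi' : (i < n)%N by lia.
rewrite -(IH Hi') -(H (Ordinal Hi')); congr f; apply: val_inj => /=; rewrite modn_small //.
Qed.

Lemma W_const u0 p : path (adj (@crown_lt n)) u0 p -> last u0 p = u0 ->
  forall e, W u0 p e = if typ e then W u0 p (A ord0) else - W u0 p (A ord0).
Proof.
move=> Hp Hl.
have HA : forall j, W u0 p (A j) = W u0 p (A ord0).
  suff HS : forall j, W u0 p (A (ordS j)) = W u0 p (A j) by exact: (ordS_ind HS).
  move=> j.
  have := VF (ordS j) Hp Hl; rewrite ordSK.
  have := VT j Hp Hl => H1 H2.
  by apply: (addIr (W u0 p (B j))); rewrite H1 H2.
move=> e; rewrite -[e]decK /typ encK; case: (enc e) => [[] j] /=.
  exact: HA.
have := VT j Hp Hl; rewrite HA => /eqP; rewrite addrC addr_eq0 => /eqP.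
by [].
Qed.


Fixpoint cwalk (i k : nat) : seq V :=
  if k is k'.+1 then (true, inord i) :: (false, inord i.+1) :: cwalk i.+1 k' else [::].

Lemma inordS i : (i < n)%N -> (inord i.+1 : 'I_n) = ordS (inord i).
Proof.
move=> Hi; have Hv : val (inord i : 'I_n) = i := inordK Hi.
apply: val_inj; rewrite /= Hv.
case: (ltngtP i.+1 n) => H.
- by rewrite inordK // modn_small.
- lia.
- by rewrite /inord val_insubd H ltnn modnn.
Qed.

Lemma inord_n : (inord n : 'I_n) = ord0.
Proof. by apply: val_inj; rewrite /= /inord val_insubd ltnn. Qed.

Lemma cwalk_path k i : (i + k <= n)%N -> path (adj (@crown_lt n)) (false, inord i) (cwalk i k).
Proof.
elim: k i => [|k IH] i //= H.
rewrite !adjE !crown_ltE eqxx /= (inordS (i := i)); last by lia.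
rewrite eqxx orbT /= -inordS; last by lia.
by apply: IH; lia.
Qed.

Lemma cwalk_last k i : last (false, inord i) (cwalk i k) = (false, inord (i + k)).
Proof. by elim: k i => [|k IH] i /=; rewrite ?addn0 // IH addSnnS. Qed.

Lemma cwalk_dn k i : (i + k <= n)%N ->
  count (fun st : V * V => val (A ord0) == (st.2, st.1)) (steps (false, inord i) (cwalk i k)) = 0%N.
Proof.
elim: k i => [|k IH] i //= H.
rewrite IH; last by lia.
rewrite !xpair_eqE /= !addn0.
case: (@eqP _ ord0 (inord i)) => [Ei|]; last by rewrite andbF.
have i0 : i = 0%N by move: (congr1 val Ei); rewrite /= inordK //; lia.
subst i; case: eqP => // /(congr1 val); rewrite /= inordK //.
Qed.

Lemma cwalk_up : (0 < up (false, inord 0) (cwalk 0 n) (A ord0))%N.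
Proof.
rewrite /up /steps /= -/(cwalk 1 _).
have -> : (inord 0 : 'I_n) = ord0 by apply: val_inj; rewrite /= inordK.
by rewrite eqxx.
Qed.

Lemma cwalk_closed : closed_walk (@crown_lt n) (false, inord 0) (cwalk 0 n).
Proof. by rewrite /closed_walk cwalk_path // cwalk_last add0n inord_n (_ : inord 0 = ord0) //; apply: val_inj; rewrite /= inordK. Qed.

Lemma cwalk_W : W (false, inord 0) (cwalk 0 n) (A ord0) != 0.
Proof.
rewrite /W /dn cwalk_dn // subr0.
by have := cwalk_up; case: (up _ _ _).
Qed.


Definition Gs : {set {perm E}} :=
  [set theta : {perm E} | [forall e, typ (theta e) == typ e] || [forall e, typ (theta e) == ~~ typ e]].

Lemma signs0 (w : int) t1 t2 : t1 != t2 ->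
  (if t1 then w else - w) + (if t2 then w else - w) = 0.
Proof. by case: t1; case: t2 => //= _; rewrite ?subrr ?addNr. Qed.

Lemma signs_neq (w : int) t1 t2 : w != 0 ->
  (if t1 then w else - w) + (if t2 then w else - w) = 0 -> t1 != t2.
Proof. case: t1; case: t2 => //= Hw H; lia. Qed.

Lemma sum_true (theta : {perm E}) u0 p i :
  \sum_(b | (val b).2 == (true, i)) W u0 p (theta b) = W u0 p (theta (A i)) + W u0 p (theta (B i)).
Proof. by apply: big_two; [rewrite AB_neq | exact: edges_at_true]. Qed.

Lemma sum_false (theta : {perm E}) u0 p k :
  \sum_(b | (val b).1 == (false, k)) W u0 p (theta b) =
  W u0 p (theta (A k)) + W u0 p (theta (B (ord_pred k))).
Proof. by apply: big_two; [rewrite AB_neq | exact: edges_at_false]. Qed.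

Lemma adm_sums (theta : {perm E}) u0 p z :
  ((s_plus theta u0 p z)%:Z - (s_minus theta u0 p z)%:Z =
     (t_plus theta u0 p z)%:Z - (t_minus theta u0 p z)%:Z) <->
  (\sum_(b | (val b).1 == z) W u0 p (theta b) = \sum_(b | (val b).2 == z) W u0 p (theta b)).
Proof.
split=> H.
- exact: (etrans (esym (s_sub theta u0 p z)) (etrans H (t_sub theta u0 p z))).
- exact: (etrans (s_sub theta u0 p z) (etrans H (esym (t_sub theta u0 p z)))).
Qed.

Lemma adm_Gs (theta : {perm E}) : admissible theta -> theta \in Gs.
Proof.
move=> Hadm.
have Hc := cwalk_closed.
have Hw := cwalk_W.
move: (cwalk 0 n) ((false, inord 0) : V) Hc Hw => p u0 Hc Hw.
have /andP [Hp /eqP Hl] := Hc.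
have HW := W_const Hp Hl.
have T1 : forall i, typ (theta (A i)) != typ (theta (B i)).
  move=> i; have /adm_sums := Hadm _ _ Hc (true, i).
  rewrite sum_true big_pred0; last by move=> b; rewrite fst_true.
  by rewrite (HW (theta (A i))) (HW (theta (B i))) => /esym; apply: signs_neq.
have T2 : forall i, typ (theta (A (ordS i))) != typ (theta (B i)).
  move=> i; have /adm_sums := Hadm _ _ Hc (false, ordS i).
  rewrite sum_false ordSK [X in _ = X]big_pred0; last by move=> b; rewrite snd_false.
  by rewrite (HW (theta (A (ordS i)))) (HW (theta (B i))); apply: signs_neq.
have HA : forall i, typ (theta (A i)) = typ (theta (A ord0)).
  apply: ordS_ind => i.
  by move: (T1 i) (T2 i); case: (typ (theta (A i))); case: (typ (theta (B i)));
     case: (typ (theta (A (ordS i)))).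
have HB : forall i, typ (theta (B i)) = ~~ typ (theta (A ord0)).
  by move=> i; move: (T1 i); rewrite HA; case: (typ _); case: (typ _).
rewrite inE; case Hc0: (typ (theta (A ord0))); [apply/orP; left | apply/orP; right];
  apply/forallP => e; rewrite -[e]decK; case: (enc e) => [[] j];
  rewrite -/(A j) -/(B j) ?HA ?HB ?typA ?typB ?Hc0 //.
Qed.

Lemma Gs_adm (theta : {perm E}) : theta \in Gs -> admissible theta.
Proof.
move=> HG u0 p Hc z; apply/adm_sums.
have /andP [Hp /eqP Hl] := Hc.
have HW := W_const Hp Hl.
have Hne : forall i j, typ (theta (A i)) != typ (theta (B j)).
  move=> i j; move: HG; rewrite inE => /orP [] /forallP H;
  by rewrite (eqP (H (A i))) (eqP (H (B j))) typA typB.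
case: z => [[] i].
- rewrite sum_true big_pred0; last by move=> b; rewrite fst_true.
  by rewrite (HW (theta (A i))) (HW (theta (B i))) signs0.
- rewrite sum_false [X in _ = X]big_pred0; last by move=> b; rewrite snd_false.
  by rewrite (HW (theta (A i))) (HW (theta (B _))) signs0.
Qed.

Lemma AM_Gs (theta : {perm E}) : in_AM theta <-> theta \in Gs.
Proof.
split; first by case=> _; exact: adm_Gs.
by move=> H; split; [exact: all_in_M | exact: Gs_adm].
Qed.

Definition idx (e : E) : 'I_n := (enc e).2.

Lemma typ_dec t j : typ (dec (t, j)) = t. Proof. by rewrite /typ encK. Qed.
Lemma idx_dec t j : idx (dec (t, j)) = j. Proof. by rewrite /idx encK. Qed.
Lemma dec_ti e : dec (typ e, idx e) = e. Proof. by rewrite /typ /idx -surjective_pairing decK. Qed.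

Definition psi_fun (x : 'S_n * 'S_n) (e : E) : E :=
  dec (typ e, if typ e then x.1 (idx e) else x.2 (idx e)).

Lemma psi_inj x : injective (psi_fun x).
Proof.
move=> e1 e2 /(congr1 enc); rewrite /psi_fun !encK => [[Et Ei]].
rewrite -(dec_ti e1) -(dec_ti e2) -Et; rewrite -Et in Ei.
by move: Ei; case: (typ e1) => Ei; rewrite (perm_inj Ei).
Qed.

Definition psi x : {perm E} := perm (@psi_inj x).

Lemma psiE x e : psi x e = psi_fun x e. Proof. by rewrite permE. Qed.

Lemma psiM : {in [set: 'S_n * 'S_n] &, {morph psi : x y / (x * y)%g}}.
Proof.
move=> x y _ _; apply/permP => e.
rewrite permM !psiE /psi_fun typ_dec idx_dec /=.
by case: (typ e); rewrite permM.
Qed.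

Canonical psi_morph := @Morphism _ _ [set: 'S_n * 'S_n] psi psiM.

Lemma psi_injm : ('injm psi_morph)%g.
Proof.
apply/injmP => [[x1 x2] [y1 y2]] _ _ /= Hxy.
have H1 : x1 = y1.
  apply/permP => j; have := congr1 (fun s : {perm E} => idx (s (A j))) Hxy.
  by rewrite /= !psiE /psi_fun /A typ_dec !idx_dec.
have H2 : x2 = y2.
  apply/permP => j; have := congr1 (fun s : {perm E} => idx (s (B j))) Hxy.
  by rewrite /= !psiE /psi_fun /B typ_dec !idx_dec.
by rewrite H1 H2.
Qed.

Definition Kg := (psi_morph @* [set: 'S_n * 'S_n])%G.

Lemma memK theta : (theta \in Kg) = [forall e, typ (theta e) == typ e].
Proof.
apply/idP/idP.
- case/morphimP => x _ _ ->; apply/forallP => e.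
  by rewrite /= psiE /psi_fun typ_dec.
- move/forallP => H.
  have HA : injective (fun j => idx (theta (A j))).
    move=> j1 j2 Ej.
    have : theta (A j1) = theta (A j2).
      by rewrite -(dec_ti (theta (A j1))) -(dec_ti (theta (A j2))) Ej
                 (eqP (H (A j1))) (eqP (H (A j2))) !typA.
    by move/perm_inj/(congr1 idx); rewrite !idx_dec.
  have HB : injective (fun j => idx (theta (B j))).
    move=> j1 j2 Ej.
    have : theta (B j1) = theta (B j2).
      by rewrite -(dec_ti (theta (B j1))) -(dec_ti (theta (B j2))) Ej
                 (eqP (H (B j1))) (eqP (H (B j2))) !typB.
    by move/perm_inj/(congr1 idx); rewrite !idx_dec.
  have -> : theta = psi (perm HA, perm HB).
    apply/permP => e; rewrite psiE /psi_fun /= !permE.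
    rewrite -{1}(dec_ti (theta e)) (eqP (H e)); congr dec; congr pair.
    by rewrite -{1 2 3}(dec_ti e); case: (typ e); rewrite ?typA ?typB.
  by apply: mem_morphim; rewrite inE.
Qed.

Lemma K_isog : Kg \isog [set: 'S_n * 'S_n].
Proof.
rewrite isog_sym.
exact: (sub_isog (G := [set: 'S_n * 'S_n]%G) (subxx _) psi_injm).
Qed.


Local Close Scope ring_scope.
Local Open Scope group_scope.

Definition sigma_fun (e : E) : E := dec (~~ typ e, idx e).
Lemma sigma_invol : involutive sigma_fun.
Proof. by move=> e; rewrite /sigma_fun typ_dec idx_dec negbK dec_ti. Qed.
Definition sigma : {perm E} := perm (inv_inj sigma_invol).
Lemma typ_sigma e : typ (sigma e) = ~~ typ e.
Proof. by rewrite permE /sigma_fun typ_dec. Qed.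
Lemma typ_sigmaV e : typ ((sigma^-1)%g e) = ~~ typ e.
Proof. by rewrite -{2}(permKV sigma e) typ_sigma negbK. Qed.

Lemma sigma2 : (sigma * sigma = 1)%g.
Proof. by apply/permP => e; rewrite permM perm1 !permE sigma_invol. Qed.

Lemma sigma_notK : (sigma \notin Kg).
Proof.
rewrite memK; apply/negP => /forallP /(_ (A ord0)).
by rewrite typ_sigma typA.
Qed.

Lemma order_sigma : #[sigma]%g = 2%N.
Proof.
have H1 : (#[sigma]%g %| 2)%N by rewrite order_dvdn expgS expg1 sigma2.
have H2 : (#[sigma]%g != 1)%N.
  rewrite order_eq1; apply: contra sigma_notK => /eqP ->; exact: group1.
have H3 := @dvdn_leq _ 2 isT H1.
have H4 := order_gt0 sigma.
move: H2 H3 H4; case: (#[sigma]%g) => [|[|[|k]]] //.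
Qed.

Definition Hg := (<[sigma]>)%G.

Lemma GsP (theta : {perm E}) : reflect (exists c, forall e, typ (theta e) = c (+) typ e) (theta \in Gs).
Proof.
rewrite inE; apply: (iffP orP).
- case=> /forallP H; [exists false | exists true] => e; by rewrite (eqP (H e)).
- case=> [[]] H; [right | left]; apply/forallP => e; by rewrite H.
Qed.

Lemma Gs_group : group_set Gs.
Proof.
apply/group_setP; split.
  by apply/GsP; exists false => e; rewrite perm1.
move=> x y /GsP [c1 H1] /GsP [c2 H2]; apply/GsP; exists (c2 (+) c1) => e.
by rewrite permM H2 H1 addbA.
Qed.

Canonical Gs_grp := Group Gs_group.

Lemma sigma_norm : Hg \subset 'N(Kg).
Proof.
rewrite cycle_subG; apply/normP; apply/setP => x; rewrite mem_conjg !memK.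
have Hc : forall e, (x ^ (sigma^-1)%g)%g e = (sigma^-1)%g (x (sigma e)).
  by move=> e; rewrite conjgE invgK !permM.
apply/forallP/forallP => H e.
- have := H ((sigma^-1)%g e); rewrite Hc permKV !typ_sigmaV.
  by case: (typ _); case: (typ _).
- by rewrite Hc typ_sigmaV (eqP (H _)) typ_sigma negbK.
Qed.

Lemma KH_TI : (Kg :&: Hg = 1)%g.
Proof.
rewrite setIC; apply: prime_TIg.
  by rewrite -orderE order_sigma.
by rewrite cycle_subG sigma_notK.
Qed.

Lemma KH_eq : (Kg * Hg)%g = Gs.
Proof.
apply/eqP; rewrite eqEsubset; apply/andP; split.
- apply: (mul_subG (G := Gs_grp)).
    apply/subsetP => x; rewrite memK => /forallP H; apply/GsP; exists false => e.
    by rewrite (eqP (H e)).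
  rewrite cycle_subG; apply/GsP; exists true => e; by rewrite typ_sigma.
- apply/subsetP => x /GsP [[] H].
  + have -> : x = ((x * sigma) * sigma)%g by rewrite -mulgA sigma2 mulg1.
    apply: mem_mulg; last exact: cycle_id.
    rewrite memK; apply/forallP => e; by rewrite permM typ_sigma H addTb negbK.
  + rewrite -[x]mulg1; apply: mem_mulg; last exact: group1.
    by rewrite memK; apply/forallP => e; rewrite H addFb.
Qed.

Lemma H_isog : Hg \isog [set: 'Z_2].
Proof.
have := Zp_isog sigma; rewrite order_sigma isog_sym.
by [].
Qed.

End Crown.

Unset Implicit Arguments.

Theorem proposition4p10 (n : nat) (hn : 2 <= n)
    (G : {set {perm incid_basis (@crown_lt n)}})
    (hG : forall theta, theta \in G <-> in_AM theta) :
  exists (K H : {group {perm incid_basis (@crown_lt n)}}),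
    [/\ (K ><| H)%g = G,
        K \isog [set: 'S_n * 'S_n] &
        H \isog [set: 'Z_2]].
Proof.
case: n hn G hG => [|[|m]] // _ G hG.
have HG : G = Gs m.
  apply/setP => theta; apply/idP/idP => H.
  - by apply/AM_Gs/hG.
  - by apply/hG/AM_Gs.
exists (Kg m), (Hg m); split.
- by rewrite sdprodE ?sigma_norm ?KH_TI // KH_eq HG.
- exact: K_isog.
- exact: H_isog.
Qed.
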